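(* Let $A\in\mathbb{R}^{n\times n}$ be monotone, let $A=P_1-R_1+S_1$ be a double weak regular splitting and $A=P_2-R_2+S_2$ a double regular splitting of $A$. Suppose $1\notin\sigma(S_2P_1^{-1})$, $-1\notin\sigma(R_2P_1^{-1})$, $\widehat{A}^{-1}\geq 0$ and $\widehat{\mathcal{A}}^{-1}\geq 0$, where $\widehat{A}=(I-S_2P_1^{-1})A$ and $\widehat{\mathcal{A}}=(I+R_2P_1^{-1})A$. Let $\widehat{P}=\widehat{\mathcal{P}}=P_2$, $\widehat{R}=R_2-S_2P_1^{-1}R_1$ and $\widehat{\mathcal{R}}=R_2P_1^{-1}R_1-S_2$. If $\widehat{\mathcal{P}}^{-1}\widehat{\mathcal{R}}\geq\widehat{P}^{-1}\widehat{R}$ and $\widehat{\mathcal{P}}^{-1}\widehat{\mathcal{A}}\geq\widehat{P}^{-1}\widehat{A}$, then $\rho(\mathcal{W}_{12})\leq\rho(W_{12})<1$, where $$W_{12}=\begin{pmatrix} P_2^{-1}R_2-P_2^{-1}S_2P_1^{-1}R_1 & P_2^{-1}S_2P_1^{-1}S_1\\ I & 0\end{pmatrix},\qquad \mathcal{W}_{12}=\begin{pmatrix} P_2^{-1}R_2P_1^{-1}R_1-P_2^{-1}S_2 & -P_2^{-1}R_2P_1^{-1}S_1\\ I & 0\end{pmatrix}.$$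
   Context: Inequalities are entrywise; $\rho$ is the spectral radius, $\sigma$ the spectrum. $A$ is monotone if $A$ is nonsingular and $A^{-1}\geq 0$. A double splitting $A=P-R+S$ with $P$ nonsingular is a double regular splitting if $P^{-1}\geq0$, $R\geq0$, $S\leq0$, and a double weak regular splitting if $P^{-1}\geq 0$, $P^{-1}R\geq0$, $P^{-1}S\leq0$. *)

(* Defs.v *)
From HB Require Import structures.
From mathcomp Require Import all_boot all_order all_algebra.
From mathcomp Require Import complex.
From mathcomp Require Import reals.
Set Implicit Arguments. Unset Strict Implicit. Unset Printing Implicit Defensive.
Import Order.TTheory GRing.Theory Num.Theory.
Local Open Scope ring_scope.

Section Defs.
Variable R : realType.

Definition mxle (m n : nat) (A B : 'M[R]_(m, n)) : Prop :=
  forall i j, A i j <= B i j.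

Definition monotone (n : nat) (A : 'M[R]_n) : Prop :=
  A \in unitmx /\ mxle 0 (invmx A).

Definition double_regular_splitting (n : nat) (A P Rm S : 'M[R]_n) : Prop :=
  [/\ A = P - Rm + S, P \in unitmx, mxle 0 (invmx P), mxle 0 Rm & mxle S 0].

Definition double_weak_regular_splitting (n : nat) (A P Rm S : 'M[R]_n) : Prop :=
  [/\ A = P - Rm + S, P \in unitmx, mxle 0 (invmx P),
      mxle 0 (invmx P *m Rm) & mxle (invmx P *m S) 0].

Definition cmx (n : nat) (A : 'M[R]_n) : 'M[R[i]]_n :=
  map_mx (fun x => (x%:C)%C) A.

Definition in_spectrum (n : nat) (A : 'M[R]_n) (z : R[i]) : Prop :=
  eigenvalue (cmx A) z.

(* the list of complex eigenvalues of A, with multiplicity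
   (roots of the characteristic polynomial over the algebraic closure) *)
Definition eigen_seq (n : nat) (A : 'M[R]_n) : seq R[i] :=
  sval (closed_field_poly_normal (char_poly (cmx A))).

(* spectral radius: the maximal modulus of an eigenvalue (0 if n = 0) *)
Definition spectral_radius (n : nat) (A : 'M[R]_n) : R :=
  \big[Num.max/0]_(z <- eigen_seq A) complex.Re `|z|.

End Defs.

(* Main.v *)
Require Import Defs.
From HB Require Import structures.
From mathcomp Require Import all_boot all_order all_algebra.
From mathcomp Require Import complex.
From mathcomp Require Import reals.
From mathcomp Require Import polyrcf classical_sets lra.
Set Implicit Arguments. Unset Strict Implicit. Unset Printing Implicit Defensive.
Import Order.TTheory GRing.Theory Num.Theory.
Local Open Scope ring_scope.
Import ComplexField.Normc.

Section PF.
Variable R : realType.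

Lemma mxle_refl m n (A : 'M[R]_(m,n)) : mxle A A.
Proof. by move=> i j. Qed.
Lemma mxle_trans m n (A B C : 'M[R]_(m,n)) : mxle A B -> mxle B C -> mxle A C.
Proof. by move=> h1 h2 i j; exact: le_trans (h1 i j) (h2 i j). Qed.
Lemma mxle_subr m n (A B : 'M[R]_(m,n)) : mxle A B <-> mxle 0 (B - A).
Proof. by split=> h i j; move: (h i j); rewrite !mxE subr_ge0. Qed.
Lemma mxle_add m n (A B C D : 'M[R]_(m,n)) :
  mxle A B -> mxle C D -> mxle (A + C) (B + D).
Proof. by move=> h1 h2 i j; rewrite !mxE; apply: lerD. Qed.
Lemma mxle_mul0 m n p (A : 'M[R]_(m,n)) (B : 'M[R]_(n,p)) :
  mxle 0 A -> mxle 0 B -> mxle 0 (A *m B).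
Proof.
move=> hA hB i j; rewrite !mxE; apply: sumr_ge0 => k _; apply: mulr_ge0.
  by move: (hA i k); rewrite mxE.
by move: (hB k j); rewrite mxE.
Qed.
Lemma mxle_mull m n p (A : 'M[R]_(m,n)) (B C : 'M[R]_(n,p)) :
  mxle 0 A -> mxle B C -> mxle (A *m B) (A *m C).
Proof. move=> hA /mxle_subr hBC; apply/mxle_subr; rewrite -mulmxBr; exact: mxle_mul0. Qed.
Lemma mxle_mulr m n p (A B : 'M[R]_(m,n)) (C : 'M[R]_(n,p)) :
  mxle 0 C -> mxle A B -> mxle (A *m C) (B *m C).
Proof. move=> hC /mxle_subr hAB; apply/mxle_subr; rewrite -mulmxBl; exact: mxle_mul0. Qed.
Lemma mxle_anti m n (A B : 'M[R]_(m,n)) : mxle A B -> mxle B A -> A = B.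
Proof. by move=> h1 h2; apply/matrixP => i j; apply: le_anti; rewrite h1 h2. Qed.
Lemma mxle_scale m n (a : R) (A B : 'M[R]_(m,n)) :
  0 <= a -> mxle A B -> mxle (a *: A) (a *: B).
Proof. by move=> ha h i j; rewrite !mxE; apply: ler_wpM2l. Qed.
Lemma mxle_opp m n (A B : 'M[R]_(m,n)) : mxle A B -> mxle (- B) (- A).
Proof. by move=> h i j; rewrite !mxE lerN2. Qed.
Lemma mxle_mulN m n p (A : 'M[R]_(m,n)) (B : 'M[R]_(n,p)) :
  mxle A 0 -> mxle 0 B -> mxle (A *m B) 0.
Proof.
move=> hA hB; have h0 : mxle 0 (- A) by move: (mxle_opp hA); rewrite oppr0.
by have := mxle_mul0 h0 hB; rewrite mulNmx => /mxle_opp; rewrite opprK oppr0.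
Qed.

Lemma rV_neq0 (V : nmodType) n (v : 'rV[V]_n) : v != 0 -> exists i, v 0 i != 0.
Proof.
move=> hv; apply/existsP; apply: contraNT hv; rewrite negb_exists => /forallP h.
by apply/eqP/matrixP => i j; rewrite ord1 mxE; apply/eqP; move: (h j); rewrite negbK.
Qed.

Lemma Mmatrix_inv N (B : 'M[R]_N) (s : R) : mxle 0 B ->
  (forall i, \sum_j B i j < s) ->
  (s%:M - B) \in unitmx /\ mxle 0 (invmx (s%:M - B)).
Proof.
move=> hB hs.
have Bge0 i j : 0 <= B i j by move: (hB i j); rewrite mxE.
have unit : (s%:M - B) \in unitmx.
  rewrite unitmxE unitfE -det_tr; apply/negP => /det0P [v vn0 hv].
  have [i0 hi0] := rV_neq0 vn0.
  have [i _ hi] := @arg_maxP _ _ _ i0 predT (fun k => `|v 0 k|) isT.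
  have hvi : 0 < `|v 0 i| by apply: lt_le_trans (hi i0 isT); rewrite normr_gt0.
  have e : s * v 0 i = \sum_k v 0 k * B i k.
    move: hv; rewrite linearB /= tr_scalar_mx mulmxBr mul_mx_scalar => /eqP.
    rewrite subr_eq0 => /eqP /matrixP /(_ 0 i); rewrite !mxE => ->.
    by apply: eq_bigr => k _; rewrite mxE.
  have s0 : 0 < s by apply: le_lt_trans (hs i); apply: sumr_ge0 => k _.
  have : s * `|v 0 i| <= (\sum_k B i k) * `|v 0 i|.
    rewrite -(ger0_norm (ltW s0)) -normrM e mulr_suml.
    apply: le_trans (ler_norm_sum _ _ _) _; apply: ler_sum => k _.
    by rewrite normrM (ger0_norm (Bge0 _ _)) mulrC ler_wpM2l //; apply: hi.
  by rewrite ler_pM2r // leNgt hs.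
split => //.
move=> i j; rewrite mxE.
set Z := invmx (s%:M - B).
have hZ : s *: Z = 1%:M + B *m Z.
  have := mulmxV unit; rewrite -/Z mulmxBl mul_scalar_mx => /eqP.
  by rewrite subr_eq => /eqP ->; rewrite addrC.
have [k _ hk] := @arg_minP _ _ _ j predT (fun k => Z k j) isT.
apply: le_trans (hk i isT); rewrite /=.
have s0 : 0 <= s - \sum_l B k l by rewrite subr_ge0 ltW.
have : Z k j * (\sum_l B k l) <= s * Z k j.
  move/matrixP: hZ => /(_ k j); rewrite !mxE => ->.
  rewrite mulr_sumr -[X in X <= _]add0r; apply: lerD.
    by case: eqP.
  by apply: ler_sum => l _; rewrite mulrC ler_wpM2l // hk.
rewrite -subr_ge0 (mulrC s) -mulrBr => h.
have hsk : 0 < s - \sum_l B k l by rewrite subr_gt0.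
by rewrite pmulr_lge0 in h.
Qed.

Lemma map_cpmx N (B : 'M[R]_N) s :
  map_mx (horner_eval s) (char_poly_mx B) = s%:M - B.
Proof.
rewrite /char_poly_mx map_mxB map_scalar_mx /= horner_evalE hornerX; congr (_ - _).
by apply/matrixP => i j; rewrite !mxE horner_evalE hornerC.
Qed.

Lemma cp_eval N (B : 'M[R]_N) s : (char_poly B).[s] = \det (s%:M - B).
Proof. by rewrite -horner_evalE /char_poly -det_map_mx map_cpmx. Qed.

Lemma adj_eval N (B : 'M[R]_N) s i j :
  (\adj (char_poly_mx B) i j).[s] = \adj (s%:M - B) i j.
Proof. rewrite -(map_cpmx B s) -map_mx_adj. by rewrite [RHS]mxE. Qed.

Lemma Re_norm_real (x : R) : complex.Re `|(x%:C)%C| = `|x|.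
Proof. by rewrite normc_def /= expr0n /= addr0 sqrtr_sqr. Qed.

Lemma eigen_seq_root N (B : 'M[R]_N) z :
  root (char_poly (cmx B)) z -> z \in eigen_seq B.
Proof.
rewrite /eigen_seq; case: (closed_field_poly_normal _) => r /= hr.
rewrite hr rootZ; first by rewrite root_prod_XsubC.
by rewrite (monicP (char_poly_monic _)) oner_eq0.
Qed.

Lemma le_rho N (B : 'M[R]_N) z : z \in eigen_seq B ->
  complex.Re `|z| <= spectral_radius B.
Proof.
rewrite /spectral_radius; elim: (eigen_seq B) => // a l ih.
rewrite inE big_cons => /predU1P [->|h]; first by rewrite le_max lexx.
by rewrite le_max ih ?orbT.
Qed.

Lemma rho_ge0 N (B : 'M[R]_N) : 0 <= spectral_radius B.
Proof. exact: bigmax_ge_id. Qed.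

Lemma det_eq0_le_rho N (B : 'M[R]_N) s :
  \det (s%:M - B) = 0 -> `|s| <= spectral_radius B.
Proof.
move=> h; rewrite -Re_norm_real; apply: le_rho; apply: eigen_seq_root.
have -> : cmx B = map_mx (real_complex R) B by [].
rewrite -map_char_poly /root horner_map cp_eval h /=.
by rewrite rmorph0.
Qed.

Lemma unit_gt_rho N (B : 'M[R]_N) u : spectral_radius B < u -> (u%:M - B) \in unitmx.
Proof.
move=> hu; rewrite unitmxE unitfE; apply/eqP => /det_eq0_le_rho h.
by move: (le_lt_trans h (lt_le_trans hu (ler_norm u))); rewrite ltxx.
Qed.

Lemma adj_entry N (B : 'M[R]_N) u i j : (u%:M - B) \in unitmx ->
  (\adj (char_poly_mx B) i j).[u] = invmx (u%:M - B) i j * (char_poly B).[u].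
Proof.
move=> hu; rewrite adj_eval cp_eval /invmx hu mxE.
have : \det (u%:M - B) != 0 by rewrite -unitfE -unitmxE.
by move=> h; rewrite mxE [in RHS]mxE mulrAC mulVf // mul1r.
Qed.

Lemma right_closed N (B : 'M[R]_N) sg : spectral_radius B < sg ->
  (forall u, sg < u -> mxle 0 (invmx (u%:M - B))) -> mxle 0 (invmx (sg%:M - B)).
Proof.
move=> hsg hu i j; rewrite mxE; rewrite leNgt; apply/negP => hneg.
set p := \adj (char_poly_mx B) i j; set q := char_poly B.
set g := p * q.
have qs : q.[sg] != 0 by rewrite /q cp_eval -unitfE -unitmxE unit_gt_rho.
have gs : g.[sg] < 0.
  rewrite hornerM adj_entry ?unit_gt_rho // -mulrA -expr2.
  by rewrite pmulr_llt0 // exprn_even_gt0.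
have e0 : 0 < - g.[sg] by rewrite oppr_gt0.
have [d d0 hd] := poly_cont sg g e0.
set y := sg + d / 2.
have hy : sg < y by rewrite /y; lra.
have : `|y - sg| < d.
  have -> : y - sg = d / 2 by rewrite /y addrAC subrr add0r.
  rewrite ger0_norm; first by lra.
  by rewrite divr_ge0 // ltW.
move=> /hd h.
have gy : 0 <= g.[y].
  rewrite hornerM adj_entry ?unit_gt_rho ?(lt_trans hsg) // -mulrA -expr2.
  by apply: mulr_ge0; [move: (hu y hy i j); rewrite mxE | apply: sqr_ge0].
have := le_lt_trans (ler_norm _) h; rewrite ltrBlDr addNr.
by move=> /(le_lt_trans gy); rewrite ltxx.
Qed.

Definition nonnegb m n (X : 'M[R]_(m,n)) := [forall i, forall j, 0 <= X i j].
Lemma nonnegP m n (X : 'M[R]_(m,n)) : reflect (mxle 0 X) (nonnegb X).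
Proof.
apply: (iffP forallP) => [h i j|h i]; first by move/forallP: (h i) => /(_ j); rewrite mxE.
by apply/forallP => j; move: (h i j); rewrite mxE.
Qed.

Lemma res_pos N (B : 'M[R]_N) s : mxle 0 B -> spectral_radius B < s ->
  (s%:M - B) \in unitmx /\ mxle 0 (invmx (s%:M - B)).
Proof.
move=> hB hs; set r := spectral_radius B.
split; first exact: unit_gt_rho.
have Bge0 i j : 0 <= B i j by move: (hB i j); rewrite mxE.
set K := 1 + \sum_i \sum_j B i j.
have big u : K <= u -> mxle 0 (invmx (u%:M - B)).
  move=> hu; apply: (Mmatrix_inv hB _).2 => i; apply: lt_le_trans hu.
  rewrite /K [X in _ < 1 + X](bigD1 i) //=.
  have : 0 <= \sum_(i0 | i0 != i) \sum_j B i0 j.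
    by apply: sumr_ge0 => k _; apply: sumr_ge0.
  move=> ?; lra.
apply/nonnegP/negPn/negP => hneg.
pose E : set R := fun u => s <= u /\ ~~ nonnegb (invmx (u%:M - B)).
have hE : has_sup E.
  split; first by exists s; split.
  exists K => u [_ hu]; rewrite leNgt; apply/negP => /ltW /big /nonnegP.
  by move: hu => /negP.
set sg := sup E.
have ssg : s <= sg by apply: sup_upper_bound => //; split.
have rsg : r < sg by apply: lt_le_trans ssg.
have above u : sg < u -> mxle 0 (invmx (u%:M - B)).
  move=> hu; apply/nonnegP/negPn/negP => hn.
  have : E u by split => //; apply: le_trans (ltW hu).
  move=> /(sup_upper_bound hE); rewrite -/sg => h.
  by move: (lt_le_trans hu h); rewrite ltxx.
have Xs := right_closed rsg above.
set X := invmx (sg%:M - B).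
have Xge0 i j : 0 <= X i j by move: (Xs i j); rewrite mxE.
set T := \sum_i \sum_j X i j.
have T0 : 0 <= T by apply: sumr_ge0 => i _; apply: sumr_ge0.
set d0 := (1 + T)^-1.
have d00 : 0 < d0 by rewrite invr_gt0; lra.
have [e [se he] hed] := sup_adherent d00 hE.
have esg : e <= sg by apply: sup_upper_bound.
set h := sg - e.
have h0 : 0 <= h by rewrite subr_ge0.
have hd : h * (1 + T) < 1.
  have hpos : 0 < 1 + T by lra.
  move: hed; rewrite -/sg => hed.
  rewrite -ltr_pdivlMr // mul1r -/d0 /h; lra.
set Y := h *: X.
have hY : mxle 0 Y by move=> i j; rewrite !mxE mulr_ge0.
have [uY pY] : (1%:M - Y) \in unitmx /\ mxle 0 (invmx (1%:M - Y)).
  apply: Mmatrix_inv => // i.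
  have -> : \sum_j Y i j = h * \sum_j X i j by rewrite mulr_sumr; apply: eq_bigr => j _; rewrite mxE.
  have : \sum_j X i j <= T.
    by rewrite /T [X in _ <= X](bigD1 i) //= lerDl; apply: sumr_ge0 => k _; apply: sumr_ge0.
  move=> hT; have := ler_wpM2l h0 hT; nra.
have uX : (sg%:M - B) \in unitmx by apply: unit_gt_rho.
have eq : e%:M - B = (sg%:M - B) *m (1%:M - Y).
  rewrite mulmxBr mulmx1 /Y -scalemxAr mulmxV // scalemx1 /h.
  have -> : (sg - e)%:M = sg%:M - e%:M :> 'M[R]_N by rewrite raddfB.
  by rewrite opprB [RHS]addrC addrA addrNK.
have ue : (e%:M - B) \in unitmx by rewrite eq unitmx_mul uX uY.
have : invmx (e%:M - B) = invmx (1%:M - Y) *m X.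
  rewrite -[RHS](mulKmx ue) eq -mulmxA (mulmxA (1%:M - Y)) mulmxV // mul1mx.
  by rewrite mulmxV // mulmx1.
by move=> hX; move: he => /negP; apply; apply/nonnegP; rewrite hX; apply: mxle_mul0.
Qed.

Lemma collatz N (B : 'M[R]_N) (z : 'rV[R]_N) (l : R) : mxle 0 B -> mxle 0 z ->
  z != 0 -> mxle (l *: z) (z *m B) -> l <= spectral_radius B.
Proof.
move=> hB hz zn0 hl; rewrite leNgt; apply/negP => hlt.
have [u p] := res_pos hB hlt.
have h1 : mxle (z *m (l%:M - B)) 0.
  rewrite mulmxBr mul_mx_scalar; apply/mxle_subr; rewrite sub0r opprB.
  exact: (proj1 (mxle_subr _ _) hl).
have h2 : mxle z 0 by rewrite -(mulmxK u z); apply: mxle_mulN.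
by move: zn0; rewrite (mxle_anti h2 hz) eqxx.
Qed.

Lemma bigmax_attained (T : eqType) (r : seq T) (F : T -> R) :
  0 < \big[Num.max/0]_(y <- r) F y ->
  exists2 y, y \in r & F y = \big[Num.max/0]_(y <- r) F y.
Proof.
elim: r => [|a l ih]; first by rewrite big_nil ltxx.
rewrite big_cons {1 3}/Order.max; case: ifP => h.
  by move=> /ih [y yl hy]; exists y => //; rewrite inE yl orbT.
by move=> _; exists a; rewrite ?inE ?eqxx.
Qed.

Lemma Re_normc (w : R[i]) : complex.Re `|w| = normc w.
Proof. by case: w => a b; rewrite normc_def. Qed.

Lemma normc_ge0 (w : R[i]) : 0 <= normc w.
Proof. by case: w => a b /=; apply: sqrtr_ge0. Qed.

Lemma normc_real (x : R) : normc ((x%:C)%C) = `|x|.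
Proof. by rewrite -Re_normc Re_norm_real. Qed.

Lemma normc_sum N (f : 'I_N -> R[i]) : normc (\sum_i f i) <= \sum_i normc (f i).
Proof.
elim/big_ind2 : _ => //; first by rewrite normc0.
by move=> x1 y1 x2 y2 h1 h2; apply: le_trans (le_normcD _ _) (lerD h1 h2).
Qed.

Lemma subeig N (B : 'M[R]_N) : mxle 0 B -> 0 < spectral_radius B ->
  exists a : 'rV[R]_N, [/\ mxle 0 a, a != 0 & mxle (spectral_radius B *: a) (a *m B)].
Proof.
move=> hB hr.
have Bge0 i j : 0 <= B i j by move: (hB i j); rewrite mxE.
have [z zin hz] := bigmax_attained hr; rewrite -/(spectral_radius B) in hz.
have : eigenvalue (cmx B) z.
  rewrite eigenvalue_root_char; move: zin; rewrite /eigen_seq.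
  case: (closed_field_poly_normal _) => r /= hr' zr.
  rewrite hr' rootZ ?root_prod_XsubC //.
  by rewrite (monicP (char_poly_monic _)) oner_eq0.
move=> /eigenvalueP [v hv vn0].
exists (\row_j normc (v 0 j)); split.
- by move=> i j; rewrite !mxE normc_ge0.
- have [i hi] := rV_neq0 vn0; apply/eqP => /matrixP /(_ 0 i); rewrite !mxE.
  by move/eq0_normc => h; move: hi; rewrite h eqxx.
- move=> i j; rewrite !mxE -hz Re_normc -normcM.
  have -> : z * v 0 j = (v *m cmx B) 0 j by rewrite hv mxE.
  rewrite mxE; apply: le_trans (normc_sum _) _; apply: ler_sum => k _.
  by rewrite !mxE normcM normc_real ger0_norm.
Qed.

Lemma mxle_row_mx m n1 n2 (a c : 'M[R]_(m,n1)) (b d : 'M[R]_(m,n2)) :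
  mxle (row_mx a b) (row_mx c d) <-> mxle a c /\ mxle b d.
Proof.
split=> [h|[h1 h2] i k].
  split=> i j; [move: (h i (lshift n2 j)); by rewrite !row_mxEl
               |move: (h i (rshift n1 j)); by rewrite !row_mxEr].
by rewrite -(splitK k); case: split => j /=; rewrite ?row_mxEl ?row_mxEr.
Qed.

Lemma mxle0_block n (A B C D : 'M[R]_n) : mxle 0 A -> mxle 0 B -> mxle 0 C -> mxle 0 D ->
  mxle 0 (block_mx A B C D).
Proof.
move=> hA hB hC hD i j; rewrite mxE.
rewrite -(splitK i) -(splitK j); case: (split i) => i'; case: (split j) => j' /=;
  rewrite ?block_mxEul ?block_mxEur ?block_mxEdl ?block_mxEdr.
- by move: (hA i' j'); rewrite mxE.
- by move: (hB i' j'); rewrite mxE.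
- by move: (hC i' j'); rewrite mxE.
- by move: (hD i' j'); rewrite mxE.
Qed.

Lemma mxle01 n : mxle 0 (1%:M : 'M[R]_n).
Proof. by move=> i j; rewrite !mxE; case: eqP. Qed.

Lemma split_subeig n (M N : 'M[R]_n) : mxle 0 M -> mxle 0 N ->
  let W := block_mx M N 1%:M 0 in 0 < spectral_radius W ->
  exists u v : 'rV[R]_n, [/\ mxle 0 u, mxle 0 v, u != 0,
     mxle (spectral_radius W *: u) (u *m M + v) &
     mxle (spectral_radius W *: v) (u *m N)].
Proof.
move=> hM hN W r0.
have hW : mxle 0 W by apply: mxle0_block => //; first apply: mxle01.

have [w [hw wn0 hww]] := subeig hW r0.
move: hw wn0 hww; rewrite -[w]hsubmxK.
set u := lsubmx w; set v := rsubmx w.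
rewrite -[X in mxle X (row_mx _ _)]row_mx0 row_mx_eq0 mul_row_block scale_row_mx mulmx1 mulmx0 addr0.
move=> /mxle_row_mx [hu hv] wn0 /mxle_row_mx [h1 h2].
exists u, v; split => //.
apply: contraNneq wn0 => u0; rewrite u0 eqxx /=.
have : mxle v 0.
  move=> i j; have := h2 i j; rewrite u0 mul0mx !mxE => h.
  nra.
by move=> h; apply/eqP; apply: mxle_anti.
Qed.

Lemma F1 n (M N Q K : 'M[R]_n) : mxle 0 M -> mxle 0 N -> mxle 0 Q ->
  Q \in unitmx -> K \in unitmx -> mxle 0 (invmx K) -> Q *m K = 1%:M - M - N ->
  spectral_radius (block_mx M N 1%:M 0) < 1.
Proof.
move=> hM hN hQ uQ uK hK e.
rewrite ltNge; apply/negP => h1.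
have r0 : 0 < spectral_radius (block_mx M N 1%:M 0) by apply: lt_le_trans h1.
have [u [v [hu hv un0 h1' h2']]] := split_subeig hM hN r0.
set r := spectral_radius _ in h1 h1' h2'.
have key : mxle u (u *m M + u *m N).
  move=> i j; have := h1' i j; have := h2' i j; have := hu i j; have := hv i j.
  rewrite !mxE => a b c d.
  have : 0 <= (r - 1) * (u i j + v i j) by apply: mulr_ge0; lra.
  nra.
set y := u *m Q.
have hy : mxle 0 y by apply: mxle_mul0.
have hyK : mxle (y *m K) 0.
  rewrite /y -mulmxA e !mulmxBr mulmx1 => i j.
  by have := key i j; rewrite !mxE; lra.
have y0 : mxle y 0 by rewrite -(mulmxK uK y); apply: mxle_mulN.
have : y = 0 by apply: mxle_anti.
move=> /(congr1 (fun x => x *m invmx Q)); rewrite /y mulmxK // mul0mx => u0.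
by move: un0; rewrite u0 eqxx.
Qed.

Lemma F2 n (Mh Nh Mc Nc : 'M[R]_n) : mxle 0 Mh -> mxle 0 Nh -> mxle 0 Mc -> mxle 0 Nc ->
  mxle Mh Mc -> mxle (Mc + Nc) (Mh + Nh) ->
  spectral_radius (block_mx Mc Nc 1%:M 0) <= 1 ->
  spectral_radius (block_mx Mc Nc 1%:M 0) <= spectral_radius (block_mx Mh Nh 1%:M 0).
Proof.
move=> hMh hNh hMc hNc hM hMN hl1.
have [l0|lpos] := eqVneq (spectral_radius (block_mx Mc Nc 1%:M 0)) 0.
  by rewrite l0 rho_ge0.
have r0 : 0 < spectral_radius (block_mx Mc Nc 1%:M 0) by rewrite lt_def lpos rho_ge0.
have [u [v [hu hv un0 h1 h2]]] := split_subeig hMc hNc r0.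
set l := spectral_radius (block_mx Mc Nc 1%:M 0) in hl1 r0 h1 h2 *.
have hW : mxle 0 (block_mx Mh Nh 1%:M 0).
  by apply: mxle0_block => //; first apply: mxle01.
set z := row_mx u (l^-1 *: (u *m Nh)).
have uNh : mxle 0 (u *m Nh) by apply: mxle_mul0.
apply: (@collatz _ _ z) => //.
- rewrite /z -[X in mxle X _]row_mx0; apply/mxle_row_mx; split => //.
  move=> i j; have := uNh i j; rewrite !mxE => h.
  by apply: mulr_ge0 => //; rewrite invr_ge0 ltW.
- by rewrite /z row_mx_eq0 negb_and un0.
rewrite /z mul_row_block scale_row_mx mulmx1 mulmx0 addr0 scalerA mulfV ?lpos // scale1r.
apply/mxle_row_mx; split; last by apply: mxle_refl.
have hM' := mxle_mull hu hM.
have hMN' := mxle_mull hu hMN.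
move=> i j; have := h1 i j; have := h2 i j; have := hM' i j; have := hMN' i j.
have := hv i j; have := hu i j; have := uNh i j.
rewrite !mulmxDr !mxE.
set a := \sum_j0 u i j0 * Mh j0 j; set b := \sum_j0 u i j0 * Mc j0 j.
set c := \sum_j0 u i j0 * Nh j0 j; set d := \sum_j0 u i j0 * Nc j0 j.
move=> g0 g1 g2 g3 g4 g5 g6.
have mu1 : 1 <= l^-1 by rewrite invf_ge1.
have lmu : l^-1 * l = 1 by rewrite mulVf ?lpos.
have hvd : v i j <= l^-1 * d.
  have := ler_wpM2l (ltW (lt_le_trans ltr01 mu1)) g5.
  by rewrite mulrA lmu mul1r.
have : 0 <= (l^-1 - 1) * (c - d) by apply: mulr_ge0; lra.
nra.
Qed.

Lemma zid1 (V : zmodType) (o a b c d : V) : o - a + b - (b - c + d) = o - (a - c) - d.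
Proof.
rewrite opprD opprB !addrA (addrAC _ c) addrK [in RHS]opprB [in RHS]addrA.
by congr (_ - _); rewrite addrAC.
Qed.
Lemma zid2 (V : zmodType) (o a b c d : V) : o - a + b + (a - c + d) = o - (c - b) - - d.
Proof.
rewrite opprK !addrA -(addrA _ b a) (addrC b a) addrA addrNK.
by rewrite opprB addrA addrAC.
Qed.

End PF.

Unset Implicit Arguments.
Theorem corollary3p20 (R : realType) (n : nat)
  (A P1 R1 S1 P2 R2 S2 : 'M[R]_n) :
  monotone A ->
  double_weak_regular_splitting A P1 R1 S1 ->
  double_regular_splitting A P2 R2 S2 ->
  ~ in_spectrum (S2 *m invmx P1) 1 ->
  ~ in_spectrum (R2 *m invmx P1) (-1) ->
  let Ahat := (1%:M - S2 *m invmx P1) *m A in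
  let Acal := (1%:M + R2 *m invmx P1) *m A in
  monotone Ahat ->
  monotone Acal ->
  let Phat := P2 in
  let Pcal := P2 in
  let Rhat := R2 - S2 *m invmx P1 *m R1 in
  let Rcal := R2 *m invmx P1 *m R1 - S2 in
  mxle (invmx Phat *m Rhat) (invmx Pcal *m Rcal) ->
  mxle (invmx Phat *m Ahat) (invmx Pcal *m Acal) ->
  let W12 : 'M[R]_(n + n) :=
    block_mx (invmx P2 *m R2 - invmx P2 *m S2 *m invmx P1 *m R1)
             (invmx P2 *m S2 *m invmx P1 *m S1)
             1%:M 0 in
  let W12cal : 'M[R]_(n + n) :=
    block_mx (invmx P2 *m R2 *m invmx P1 *m R1 - invmx P2 *m S2)
             (- (invmx P2 *m R2 *m invmx P1 *m S1))
             1%:M 0 in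
  spectral_radius W12cal <= spectral_radius W12 /\ spectral_radius W12 < 1.

Proof.
move=> hA [eA uP1 hP1i hP1R hP1S] [eA2 uP2 hP2i hR2 hS2] _ _ Ahat Acal [uAh hAh] [uAc hAc]
  Phat Pcal Rhat Rcal hR hAA W12 W12cal.
set Q := invmx P2; set P1i := invmx P1.
set Mh := Q *m R2 - Q *m S2 *m P1i *m R1.
set Nh := Q *m S2 *m P1i *m S1.
set Mc := Q *m R2 *m P1i *m R1 - Q *m S2.
set Nc := - (Q *m R2 *m P1i *m S1).
have nS2 : mxle 0 (- S2) by move: (mxle_opp hS2); rewrite oppr0.
have nP1S : mxle 0 (- (P1i *m S1)) by move: (mxle_opp hP1S); rewrite oppr0.
have QS2 : mxle 0 (Q *m - S2) by apply: mxle_mul0.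
have QR2 : mxle 0 (Q *m R2) by apply: mxle_mul0.
have hMh : mxle 0 Mh.
  have -> : Mh = Q *m R2 + (Q *m - S2) *m (P1i *m R1). by rewrite mulmxN (mulNmx (Q *m S2)) !mulmxA.
  by have := mxle_add QR2 (mxle_mul0 QS2 hP1R); rewrite addr0.
have hNh : mxle 0 Nh.
  have -> : Nh = (Q *m - S2) *m - (P1i *m S1) by rewrite mulmxN (mulmxN Q) (mulNmx (Q *m S2)) opprK !mulmxA.
  exact: mxle_mul0.
have hMc : mxle 0 Mc.
  have -> : Mc = (Q *m R2) *m (P1i *m R1) + Q *m - S2 by rewrite mulmxN !mulmxA.
  by have := mxle_add (mxle_mul0 QR2 hP1R) QS2; rewrite addr0.
have hNc : mxle 0 Nc.
  have -> : Nc = (Q *m R2) *m - (P1i *m S1) by rewrite mulmxN !mulmxA.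
  exact: mxle_mul0.
have hMM : mxle Mh Mc.
  have e1 : invmx Phat *m Rhat = Mh by rewrite /Rhat mulmxBr !mulmxA.
  have e2 : invmx Pcal *m Rcal = Mc by rewrite /Rcal mulmxBr !mulmxA.
  by rewrite -e1 -e2.
have e1 : P1i *m A = 1%:M - P1i *m R1 + P1i *m S1.
  by rewrite {1}eA mulmxDr mulmxBr mulVmx.
have e2 : Q *m A = 1%:M - Q *m R2 + Q *m S2.
  by rewrite {1}eA2 mulmxDr mulmxBr mulVmx.
have eh : Q *m Ahat = 1%:M - Mh - Nh.
  rewrite /Ahat mulmxBl mul1mx (mulmxBr Q) e2 -!mulmxA -/P1i e1.
  rewrite (mulmxDr S2) (mulmxBr S2) mulmx1 (mulmxDr Q) (mulmxBr Q) !mulmxA.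
  by rewrite zid1.
have ec : Q *m Acal = 1%:M - Mc - Nc.
  rewrite /Acal mulmxDl mul1mx (mulmxDr Q) e2 -!mulmxA -/P1i e1.
  rewrite (mulmxDr R2) (mulmxBr R2) mulmx1 (mulmxDr Q) (mulmxBr Q) !mulmxA.
  by rewrite zid2.
have hMN : mxle (Mc + Nc) (Mh + Nh).
  move: hAA; rewrite /Phat /Pcal -/Q eh ec => h i j.
  by have := h i j; rewrite !mxE; lra.
have uQ : Q \in unitmx by rewrite unitmx_inv.
have r1 : spectral_radius W12 < 1 by apply: (F1 hMh hNh hP2i uQ uAh hAh eh).
have r2 : spectral_radius W12cal < 1 by apply: (F1 hMc hNc hP2i uQ uAc hAc ec).
split => //.
exact: (F2 hMh hNh hMc hNc hMM hMN (ltW r2)).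
Qed.
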